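(* Let $f:\mathbb{N}\to(0,\infty)$ be a function such that both $f$ and $1/f$ (the function $n\mapsto f(n)^{-1}$) are weakly super-multiplicative. Suppose $f$ has a normal order $g:(0,\infty)\to(0,\infty)$ which is monotonic or $\log$-uniformly continuous. Then there exists a constant $c\in\mathbb{R}$ such that $f(n)=n^c$ for all $n\in\mathbb{N}$.
   Context: A function $f:\mathbb{N}\to[0,\infty)$ is weakly super-multiplicative if for all $n\in\mathbb{N}$ and all $\epsilon>0$ there exist $x_0>0$ and $\delta>0$ such that for all real $x>x_0$, $\#\{m\in\mathbb{N}\cap[x,(1+\epsilon)x]: f(nm)\ge(1-\epsilon)f(n)f(m)\}\ge\delta x$. A function $f:\mathbb{N}\to[0,\infty)$ has normal order $g$ if for every $\epsilon>0$ the set $\{n\in\mathbb{N}: |f(n)-g(n)|\ge\epsilon g(n)\}$ has upper (natural) density $0$. A function $g:(0,\infty)\to(0,\infty)$ is $\log$-uniformly continuous if for every $\epsilon>0$ there is $\delta>0$ such that for all $x,y>0$ with $|x/y-1|<\delta$ we have $|g(x)/g(y)-1|<\epsilon$. *)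

(* Defs.v *)
From Stdlib Require Import Reals Lra Lia List Bool.
Open Scope bool_scope.
Open Scope R_scope.

Definition Rleb (a b : R) : bool := if Rle_dec a b then true else false.

Definition count_range (P : nat -> bool) (lo hi : nat) : nat :=
  length (filter P (seq lo (S hi - lo))).

Definition wsm_count (f : nat -> R) (n : nat) (eps x : R) : nat :=
  count_range
    (fun m => Rleb x (INR m) && Rleb (INR m) ((1 + eps) * x)
              && Rleb ((1 - eps) * f n * f m) (f (n * m)%nat))
    1 (Z.to_nat (up ((1 + eps) * x))).

Definition weakly_supermult (f : nat -> R) : Prop :=
  forall n : nat, (1 <= n)%nat -> forall eps : R, 0 < eps ->
    exists x0 delta : R, 0 < x0 /\ 0 < delta /\
      forall x : R, x0 < x -> delta * x <= INR (wsm_count f n eps x).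

Definition upper_density_zero (A : nat -> bool) : Prop :=
  forall eta : R, 0 < eta -> exists N0 : nat, forall N : nat, (N0 <= N)%nat ->
    (1 <= N)%nat -> INR (count_range A 1 N) / INR N <= eta.

Definition normal_order (f : nat -> R) (g : R -> R) : Prop :=
  forall eps : R, 0 < eps ->
    upper_density_zero
      (fun n => Rleb (eps * g (INR n)) (Rabs (f n - g (INR n)))).

Definition monotonic_pos (g : R -> R) : Prop :=
  (forall x y, 0 < x -> x <= y -> g x <= g y) \/
  (forall x y, 0 < x -> x <= y -> g y <= g x).

Definition log_unif_cont (g : R -> R) : Prop :=
  forall eps : R, 0 < eps -> exists delta : R, 0 < delta /\
    forall x y : R, 0 < x -> 0 < y -> Rabs (x / y - 1) < delta ->
      Rabs (g x / g y - 1) < eps.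

(* Main.v *)
Require Import Defs.
From Stdlib Require Import Reals Lra Lia List Bool Classical ZArith.
Open Scope R_scope.

Definition cnt (P : nat -> bool) (N : nat) : nat := length (filter P (seq 1 N)).

Lemma count_range_1 P N : count_range P 1 N = cnt P N.
Proof. unfold count_range, cnt. replace (S N - 1)%nat with N by lia. reflexivity. Qed.

Lemma cnt_S P N : cnt P (S N) = (cnt P N + (if P (S N) then 1 else 0))%nat.
Proof.
  unfold cnt. rewrite seq_S, filter_app, length_app. simpl.
  destruct (P (S N)); simpl; lia.
Qed.

Lemma cnt_split P Q N : (cnt P N <= cnt (fun m => P m && negb (Q m)) N + cnt Q N)%nat.
Proof.
  induction N. unfold cnt; simpl; lia.
  rewrite !cnt_S. destruct (P (S N)), (Q (S N)); simpl; lia.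
Qed.

Lemma cnt_mono P Q N : (forall m, P m = true -> Q m = true) -> (cnt P N <= cnt Q N)%nat.
Proof.
  intros H. induction N. unfold cnt; simpl; lia.
  rewrite !cnt_S. destruct (P (S N)) eqn:E. rewrite (H _ E). lia.
  destruct (Q (S N)); lia.
Qed.

Lemma cnt_add A N d : (1 <= d)%nat ->
  (cnt A N + (if A (N + d)%nat then 1 else 0) <= cnt A (N + d))%nat.
Proof.
  intros Hd. destruct d as [|d]. lia. clear Hd.
  induction d.
  - replace (N + 1)%nat with (S N) by lia. rewrite cnt_S. lia.
  - replace (N + S (S d))%nat with (S (N + S d)) by lia. rewrite cnt_S.
    destruct (A (N + S d)%nat); destruct (A (S (N + S d))); lia.
Qed.

Lemma cnt_mul n A N : (1 <= n)%nat ->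
  (cnt (fun m => A (n * m)%nat) N <= cnt A (n * N))%nat.
Proof.
  intros Hn. induction N. unfold cnt; simpl. rewrite Nat.mul_0_r. simpl. lia.
  rewrite cnt_S. replace (n * S N)%nat with (n * N + n)%nat by lia.
  pose proof (cnt_add A (n*N) n Hn).
  replace (n * S N)%nat with (n * N + n)%nat by lia. lia.
Qed.

Lemma cnt_le P N : (cnt P N <= N)%nat.
Proof.
  induction N. unfold cnt; simpl; lia. rewrite cnt_S. destruct (P (S N)); lia.
Qed.

Lemma cnt_pos_ex P N : (0 < cnt P N)%nat -> exists m, (1 <= m <= N)%nat /\ P m = true.
Proof.
  unfold cnt. destruct (filter P (seq 1 N)) eqn:E. simpl; lia.
  intros _. assert (In n (filter P (seq 1 N))) by (rewrite E; left; auto).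
  apply filter_In in H. destruct H as [H1 H2]. apply in_seq in H1. exists n. split; auto. lia.
Qed.

Lemma Rleb_true a b : Rleb a b = true <-> a <= b.
Proof. unfold Rleb. destruct (Rle_dec a b); split; intros; auto; try discriminate; contradiction. Qed.
Lemma Rleb_false a b : Rleb a b = false <-> b < a.
Proof. unfold Rleb. destruct (Rle_dec a b); split; intros; auto; try discriminate; lra. Qed.

Lemma up_nat (r : R) : 0 < r ->
  r < INR (Z.to_nat (up r)) /\ INR (Z.to_nat (up r)) <= r + 1.
Proof.
  intros Hr. destruct (archimed r) as [H1 H2].
  assert (Hz : (0 <= up r)%Z). { apply le_IZR. lra. }
  rewrite INR_IZR_INZ, Z2Nat.id by exact Hz. lra.
Qed.

Lemma INR_le_nat a b : INR a <= INR b -> (a <= b)%nat.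
Proof. intros H. apply INR_le. exact H. Qed.

Lemma find_good (f : nat -> R) (g : R -> R) (n : nat) (eps : R) (Q : nat -> bool) :
  (1 <= n)%nat -> 0 < eps -> eps <= 1 -> normal_order f g ->
  (exists x0 delta : R, 0 < x0 /\ 0 < delta /\ forall x, x0 < x ->
     delta * x <= INR (cnt (fun m => Rleb x (INR m) && Rleb (INR m) ((1 + eps) * x) && Q m)
                        (Z.to_nat (up ((1 + eps) * x))))) ->
  exists X, forall y, X <= y -> exists m, (1 <= m)%nat /\ y <= INR m <= (1 + eps) * y
     /\ Q m = true /\ Rabs (f m - g (INR m)) < eps * g (INR m)
     /\ Rabs (f (n * m)%nat - g (INR (n * m))) < eps * g (INR (n * m)).
Proof.
  intros Hn He He1 Hno [x0 [delta [Hx0 [Hd Hc]]]].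
  set (Bad := fun n0 : nat => Rleb (eps * g (INR n0)) (Rabs (f n0 - g (INR n0)))).
  assert (HnR : 1 <= INR n) by (apply (le_INR 1); lia).
  destruct (Hno eps He (delta / (6 * (1 + INR n)))) as [N0 HN0].
  { apply Rdiv_lt_0_compat; lra. }
  change (fun n0 : nat => Rleb (eps * g (INR n0)) (Rabs (f n0 - g (INR n0)))) with Bad in HN0.
  set (c := delta / (6 * (1 + INR n))) in HN0.
  assert (Hc6 : c * (1 + INR n) = delta / 6) by (unfold c; field; lra).
  exists (x0 + INR N0 + 1). intros y Hy.
  assert (HN0p : 0 <= INR N0) by apply pos_INR.
  set (M := Z.to_nat (up ((1 + eps) * y))).
  destruct (up_nat ((1 + eps) * y)) as [HM1 HM2]. nra.
  fold M in HM1, HM2.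
  assert (HMN0 : (N0 <= M)%nat) by (apply INR_le_nat; nra).
  assert (HM1n : (1 <= M)%nat) by (apply INR_le_nat; simpl; nra).
  assert (HnMN0 : (N0 <= n * M)%nat) by nia.
  assert (HnM1 : (1 <= n * M)%nat) by nia.
  pose proof (HN0 M HMN0 HM1n) as B1. rewrite count_range_1 in B1.
  pose proof (HN0 (n * M)%nat HnMN0 HnM1) as B2. rewrite count_range_1 in B2.
  assert (HMp : 0 < INR M) by (apply lt_0_INR; lia).
  assert (HnMp : 0 < INR (n * M)) by (apply lt_0_INR; lia).
  apply Rmult_le_compat_r with (r := INR M) in B1; [|lra].
  apply Rmult_le_compat_r with (r := INR (n*M)) in B2; [|lra].
  unfold Rdiv in B1, B2. rewrite Rmult_assoc, Rinv_l in B1 by lra.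
  rewrite Rmult_assoc, Rinv_l in B2 by lra. rewrite Rmult_1_r in B1, B2.
  fold M in Hc.
  rewrite mult_INR in B2.
  pose proof (Hc y ltac:(lra)) as G.
  set (Pw := fun m => Rleb y (INR m) && Rleb (INR m) ((1 + eps) * y) && Q m) in G.
  pose proof (cnt_split Pw Bad M) as S1.
  pose proof (cnt_split (fun m => Pw m && negb (Bad m)) (fun m => Bad (n * m)%nat) M) as S2.
  pose proof (cnt_mul n Bad M Hn) as S3.
  set (P' := fun m => Pw m && negb (Bad m) && negb (Bad (n * m)%nat)) in S2.
  assert (Hpos : (0 < cnt P' M)%nat).
  { apply INR_lt. simpl.
    assert (E : (cnt Pw M <= cnt P' M + cnt Bad M + cnt Bad (n * M))%nat) by lia.
    apply le_INR in E. rewrite !plus_INR in E.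
    assert (INR (cnt Bad M) + INR (cnt Bad (n*M)) <= c * (INR M * (1 + INR n))).
    { replace (c * (INR M * (1 + INR n))) with (c * INR M + c * (INR n * INR M)) by ring.
      lra. }
    assert (c * (INR M * (1 + INR n)) = delta / 6 * INR M) by (rewrite <- Hc6; ring).
    fold M in G. assert (HM3 : INR M <= 3 * y) by nra.
    assert (delta / 6 * INR M <= delta / 6 * (3 * y)) by (apply Rmult_le_compat_l; lra). assert (0 < delta * y) by (apply Rmult_lt_0_compat; lra). lra. }
  destruct (cnt_pos_ex P' M Hpos) as [m [Hm Pm]].
  unfold P', Pw in Pm. apply andb_prop in Pm as [Pm Pb2].
  apply andb_prop in Pm as [Pm Pb1]. apply andb_prop in Pm as [Pm HQ].
  apply andb_prop in Pm as [Pm1 Pm2].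
  apply Rleb_true in Pm1, Pm2. apply negb_true_iff in Pb1, Pb2.
  unfold Bad in Pb1, Pb2. apply Rleb_false in Pb1, Pb2.
  exists m. repeat split; auto; lia.
Qed.

Lemma rawA1 (f : nat -> R) (g : R -> R) : normal_order f g -> weakly_supermult f ->
  forall n, (1 <= n)%nat -> forall eps, 0 < eps -> eps <= 1 ->
  exists X, forall y, X <= y -> exists m, (1 <= m)%nat /\ y <= INR m <= (1 + eps) * y
     /\ (1 - eps) * f n * f m <= f (n * m)%nat /\ Rabs (f m - g (INR m)) < eps * g (INR m)
     /\ Rabs (f (n * m)%nat - g (INR (n * m))) < eps * g (INR (n * m)).
Proof.
  intros Hno Hw n Hn eps He He1.
  destruct (find_good f g n eps (fun m => Rleb ((1 - eps) * f n * f m) (f (n * m)%nat)) Hn He He1 Hno)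
    as [X HX].
  { destruct (Hw n Hn eps He) as [x0 [d [H1 [H2 H3]]]]. exists x0, d. split; auto. split; auto.
    intros x Hx. specialize (H3 x Hx). unfold wsm_count in H3. rewrite count_range_1 in H3. exact H3. }
  exists X. intros y Hy. destruct (HX y Hy) as [m [H1 [H2 [H3 H4]]]]. exists m.
  apply Rleb_true in H3. tauto.
Qed.

Lemma rawA2 (f : nat -> R) (g : R -> R) : normal_order f g -> weakly_supermult (fun n => / f n) ->
  forall n, (1 <= n)%nat -> forall eps, 0 < eps -> eps <= 1 ->
  exists X, forall y, X <= y -> exists m, (1 <= m)%nat /\ y <= INR m <= (1 + eps) * y
     /\ (1 - eps) * / f n * / f m <= / f (n * m)%nat /\ Rabs (f m - g (INR m)) < eps * g (INR m)
     /\ Rabs (f (n * m)%nat - g (INR (n * m))) < eps * g (INR (n * m)).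
Proof.
  intros Hno Hw n Hn eps He He1.
  destruct (find_good f g n eps (fun m => Rleb ((1 - eps) * / f n * / f m) (/ f (n * m)%nat)) Hn He He1 Hno)
    as [X HX].
  { destruct (Hw n Hn eps He) as [x0 [d [H1 [H2 H3]]]]. exists x0, d. split; auto. split; auto.
    intros x Hx. specialize (H3 x Hx). unfold wsm_count in H3. rewrite count_range_1 in H3. exact H3. }
  exists X. intros y Hy. destruct (HX y Hy) as [m [H1 [H2 [H3 H4]]]]. exists m.
  apply Rleb_true in H3. tauto.
Qed.
Lemma up_bound e L fn fm fnm gm gnm gy gny :
  0 < e -> e <= 1/2 -> 1 <= L -> 0 < fn -> 0 < fm -> 0 < gm -> 0 < gnm -> 0 < gy -> 0 < gny ->
  (1 - e) * fn * fm <= fnm -> Rabs (fm - gm) < e * gm -> Rabs (fnm - gnm) < e * gnm ->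
  gnm <= L * gny -> gy <= L * gm ->
  (1 - e) * (1 - e) * fn * gy <= L * L * (1 + e) * gny.
Proof.
  intros. apply Rabs_def2 in H9, H10. destruct H9, H10.
  assert (A1 : (1 - e) * fn * ((1 - e) * gm) <= (1 + e) * gnm).
  { apply Rle_trans with ((1 - e) * fn * fm). apply Rmult_le_compat_l. nra. lra. lra. }
  assert (A2 : (1 - e) * (1 - e) * fn * gy <= (1 - e) * (1 - e) * fn * (L * gm)).
  { apply Rmult_le_compat_l. nra. lra. }
  assert (A3 : (1 + e) * gnm <= (1 + e) * (L * gny)) by (apply Rmult_le_compat_l; lra).
  assert (A4 : L * ((1 - e) * fn * ((1 - e) * gm)) <= L * ((1 + e) * (L * gny))).
  { apply Rmult_le_compat_l; lra. }
  nra.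
Qed.

Lemma low_bound e L fn fm fnm gm gnm gy gny :
  0 < e -> e <= 1/2 -> 1 <= L -> 0 < fn -> 0 < fm -> 0 < fnm -> 0 < gm -> 0 < gnm -> 0 < gy -> 0 < gny ->
  (1 - e) * / fn * / fm <= / fnm -> Rabs (fm - gm) < e * gm -> Rabs (fnm - gnm) < e * gnm ->
  gny <= L * gnm -> gm <= L * gy ->
  (1 - e) * (1 - e) * gny <= L * L * (1 + e) * fn * gy.
Proof.
  intros. apply Rabs_def2 in H10, H11. destruct H10, H11.
  assert (B0 : (1 - e) * fnm <= fn * fm).
  { apply Rmult_le_compat_r with (r := fn * fm * fnm) in H9; [|left; repeat apply Rmult_lt_0_compat; lra].
    replace ((1 - e) * / fn * / fm * (fn * fm * fnm)) with ((1 - e) * fnm) in H9 by (field; lra).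
    replace (/ fnm * (fn * fm * fnm)) with (fn * fm) in H9 by (field; lra). exact H9. }
  assert (A1 : (1 - e) * ((1 - e) * gnm) <= fn * ((1 + e) * gm)).
  { apply Rle_trans with ((1 - e) * fnm). apply Rmult_le_compat_l; lra.
    apply Rle_trans with (fn * fm). exact B0. apply Rmult_le_compat_l; lra. }
  assert (A2 : (1 - e) * (1 - e) * gny <= (1 - e) * (1 - e) * (L * gnm)).
  { apply Rmult_le_compat_l. nra. lra. }
  assert (A3 : fn * ((1 + e) * gm) <= fn * ((1 + e) * (L * gy))).
  { apply Rmult_le_compat_l. lra. apply Rmult_le_compat_l; lra. }
  assert (A4 : L * ((1 - e) * ((1 - e) * gnm)) <= L * (fn * ((1 + e) * (L * gy)))).
  { apply Rmult_le_compat_l; lra. }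
  nra.
Qed.

Definition Flat (g : R -> R) (y rho L : R) : Prop :=
  forall z, y <= z -> z <= rho * y -> g z <= L * g y /\ g y <= L * g z.

Lemma approx (f : nat -> R) (g : R -> R) :
  (forall n, (1 <= n)%nat -> 0 < f n) -> (forall x, 0 < x -> 0 < g x) ->
  normal_order f g -> weakly_supermult f -> weakly_supermult (fun n => / f n) ->
  forall n, (1 <= n)%nat -> forall e, 0 < e -> e <= 1/2 ->
  exists X, forall y rho L, X <= y -> 1 <= L -> 1 + e <= rho ->
    Flat g y rho L -> Flat g (INR n * y) rho L ->
    (1 - e) * (1 - e) * f n * g y <= L * L * (1 + e) * g (INR n * y) /\
    (1 - e) * (1 - e) * g (INR n * y) <= L * L * (1 + e) * f n * g y.
Proof.
  intros hf hg Hno Hw1 Hw2 n Hn e He He2.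
  destruct (rawA1 f g Hno Hw1 n Hn e He ltac:(lra)) as [X1 HX1].
  destruct (rawA2 f g Hno Hw2 n Hn e He ltac:(lra)) as [X2 HX2].
  exists (Rmax 1 (Rmax X1 X2)). intros y rho L Hy HL Hrho F1 F2.
  assert (Hy1 : 1 <= y) by (eapply Rle_trans; [apply Rmax_l|exact Hy]).
  assert (HyX1 : X1 <= y) by (eapply Rle_trans; [|exact Hy]; eapply Rle_trans; [|apply Rmax_r]; apply Rmax_l).
  assert (HyX2 : X2 <= y) by (eapply Rle_trans; [|exact Hy]; eapply Rle_trans; [|apply Rmax_r]; apply Rmax_r).
  assert (HnR : 1 <= INR n) by (apply (le_INR 1); lia).
  split.
  - destruct (HX1 y HyX1) as [m [Hm [[Hm1 Hm2] [Hi [Ha Hb]]]]].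
    assert (HmR : 1 <= INR m) by (apply (le_INR 1); lia).
    rewrite mult_INR in Hb.
    destruct (F1 (INR m)) as [_ G1]; [lra|nra|].
    destruct (F2 (INR n * INR m)) as [G2 _]; [apply Rmult_le_compat_l; lra|
      replace (rho * (INR n * y)) with (INR n * (rho * y)) by ring; apply Rmult_le_compat_l; nra|].
    apply (up_bound e L (f n) (f m) (f (n*m)%nat) (g (INR m)) (g (INR n * INR m)) (g y) (g (INR n * y)));
      auto; try lra.
    all: first [apply hf; lia | apply hg; nra | assumption | lra].
  - destruct (HX2 y HyX2) as [m [Hm [[Hm1 Hm2] [Hi [Ha Hb]]]]].
    assert (HmR : 1 <= INR m) by (apply (le_INR 1); lia).
    rewrite mult_INR in Hb.
    destruct (F1 (INR m)) as [G1 _]; [lra|nra|].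
    destruct (F2 (INR n * INR m)) as [_ G2]; [apply Rmult_le_compat_l; lra|
      replace (rho * (INR n * y)) with (INR n * (rho * y)) by ring; apply Rmult_le_compat_l; nra|].
    apply (low_bound e L (f n) (f m) (f (n*m)%nat) (g (INR m)) (g (INR n * INR m)) (g y) (g (INR n * y)));
      auto; try lra.
    all: first [apply hf; lia | apply hg; nra | assumption | lra].
Qed.

Definition FlatProp (g : R -> R) : Prop :=
  forall L, 1 < L -> exists rho, 1 < rho /\ forall t1 t2 t3 X, 1 <= t1 -> 1 <= t2 -> 1 <= t3 ->
    exists y, X <= y /\ Flat g (t1 * y) rho L /\ Flat g (t2 * y) rho L /\ Flat g (t3 * y) rho L.

Definition Doubling (g : R -> R) : Prop :=
  exists C X0, 0 < C /\ forall w z, X0 <= w -> w <= z -> z <= 2 * w ->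
    g z <= C * g w /\ g w <= C * g z.

Lemma K_bound e e' : 0 < e' -> e' <= e -> e <= 1/11 ->
  (1 + e) * (1 + e) * (1 + e') <= (1 + 11 * e) * ((1 - e') * (1 - e')).
Proof.
  intros. assert ((1 - e) * (1 - e) <= (1 - e') * (1 - e')) by nra.
  assert ((1 + e) * (1 + e) * (1 + e) <= (1 + 11 * e) * ((1 - e) * (1 - e))) by nra.
  nra.
Qed.

Lemma approxK (f : nat -> R) (g : R -> R) :
  (forall n, (1 <= n)%nat -> 0 < f n) -> (forall x, 0 < x -> 0 < g x) ->
  normal_order f g -> weakly_supermult f -> weakly_supermult (fun n => / f n) ->
  forall n, (1 <= n)%nat -> forall e e' rho, 0 < e' -> e' <= e -> e <= 1/11 -> 1 + e' <= rho ->
  exists X, forall y, X <= y ->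
    Flat g y rho (1 + e) -> Flat g (INR n * y) rho (1 + e) ->
    f n * g y <= (1 + 11 * e) * g (INR n * y) /\
    g (INR n * y) <= (1 + 11 * e) * f n * g y.
Proof.
  intros hf hg Hno Hw1 Hw2 n Hn e e' rho He' Hee He Hrho.
  destruct (approx f g hf hg Hno Hw1 Hw2 n Hn e' He' ltac:(lra)) as [X HX].
  exists (Rmax X 1). intros y Hy F1 F2.
  assert (HyX : X <= y) by (eapply Rle_trans; [apply Rmax_l|exact Hy]).
  assert (Hy1 : 1 <= y) by (eapply Rle_trans; [apply Rmax_r|exact Hy]).
  assert (HnR : 1 <= INR n) by (apply (le_INR 1); lia).
  destruct (HX y rho (1 + e) HyX ltac:(lra) Hrho F1 F2) as [A1 A2].
  pose proof (K_bound e e' He' Hee He) as KB.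
  assert (gy : 0 < g y) by (apply hg; lra).
  assert (gny : 0 < g (INR n * y)) by (apply hg; nra).
  assert (fn : 0 < f n) by (apply hf; lia).
  assert (P : 0 < (1 - e') * (1 - e')) by nra.
  split.
  - apply Rmult_le_reg_l with ((1 - e') * (1 - e')); auto.
    apply Rle_trans with ((1 + e) * (1 + e) * (1 + e') * g (INR n * y)). nra.
    rewrite <- Rmult_assoc. apply Rmult_le_compat_r; lra.
  - apply Rmult_le_reg_l with ((1 - e') * (1 - e')); auto.
    apply Rle_trans with ((1 + e) * (1 + e) * (1 + e') * (f n * g y)). nra.
    assert (0 < f n * g y) by nra.
    replace ((1 - e') * (1 - e') * ((1 + 11 * e) * f n * g y)) with
       ((1 - e') * (1 - e') * (1 + 11 * e) * (f n * g y)) by ring.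
    apply Rmult_le_compat_r; lra.
Qed.

Lemma close_le a b : 0 <= b -> (forall e, 0 < e -> e <= 1/11 -> a <= (1 + 77 * e) * b) -> a <= b.
Proof.
  intros Hb H. destruct (Rle_dec a b) as [|Hab]; auto. exfalso.
  apply Rnot_le_lt in Hab.
  set (e := Rmin (1/11) ((a - b) / (154 * b + 1))).
  assert (He : 0 < e). { unfold e. apply Rmin_pos. lra. apply Rdiv_lt_0_compat; lra. }
  assert (He1 : e <= 1/11) by apply Rmin_l.
  assert (He2 : e * (154 * b + 1) <= a - b).
  { assert (e <= (a - b) / (154 * b + 1)) by apply Rmin_r.
    apply Rmult_le_compat_r with (r := 154 * b + 1) in H0; [|lra].
    unfold Rdiv in H0. rewrite Rmult_assoc, Rinv_l in H0; lra. }
  specialize (H e He He1). nra.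
Qed.

Lemma cube_bound e : 0 < e -> e <= 1/11 ->
  (1 + 11 * e) * ((1 + 11 * e) * (1 + 11 * e)) <= 1 + 77 * e.
Proof. intros. nra. Qed.

Lemma mult_prop (f : nat -> R) (g : R -> R) :
  (forall n, (1 <= n)%nat -> 0 < f n) -> (forall x, 0 < x -> 0 < g x) ->
  normal_order f g -> weakly_supermult f -> weakly_supermult (fun n => / f n) ->
  FlatProp g ->
  forall n k, (1 <= n)%nat -> (1 <= k)%nat -> f (n * k)%nat = f n * f k.
Proof.
  intros hf hg Hno Hw1 Hw2 HF n k Hn Hk.
  assert (HnR : 1 <= INR n) by (apply (le_INR 1); lia).
  assert (HkR : 1 <= INR k) by (apply (le_INR 1); lia).
  assert (Hnk : (1 <= n * k)%nat) by nia.
  assert (HnkR : 1 <= INR (n * k)) by (apply (le_INR 1); lia).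
  assert (fn : 0 < f n) by (apply hf; lia).
  assert (fk : 0 < f k) by (apply hf; lia).
  assert (fnk : 0 < f (n * k)%nat) by (apply hf; lia).
  assert (MAIN : forall e, 0 < e -> e <= 1/11 ->
     f n * f k <= (1 + 77 * e) * f (n * k)%nat /\ f (n * k)%nat <= (1 + 77 * e) * (f n * f k)).
  { intros e He He1.
    destruct (HF (1 + e) ltac:(lra)) as [rho [Hrho HFr]].
    set (e' := Rmin e (rho - 1)).
    assert (He' : 0 < e') by (apply Rmin_pos; lra).
    assert (He'e : e' <= e) by apply Rmin_l.
    assert (He'r : 1 + e' <= rho) by (pose proof (Rmin_r e (rho - 1)); unfold e'; lra).
    destruct (approxK f g hf hg Hno Hw1 Hw2 k Hk e e' rho He' He'e He1 He'r) as [Xk HXk].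
    destruct (approxK f g hf hg Hno Hw1 Hw2 (n*k)%nat Hnk e e' rho He' He'e He1 He'r) as [Xnk HXnk].
    destruct (approxK f g hf hg Hno Hw1 Hw2 n Hn e e' rho He' He'e He1 He'r) as [Xn HXn].
    destruct (HFr 1 (INR k) (INR (n * k)) (Rmax 1 (Rmax Xk (Rmax Xnk Xn))) ltac:(lra) HkR HnkR)
      as [y [Hy [F1 [F2 F3]]]].
    rewrite Rmult_1_l in F1.
    assert (Hy1 : 1 <= y) by (eapply Rle_trans; [apply Rmax_l|exact Hy]).
    assert (Hy2 : Rmax Xk (Rmax Xnk Xn) <= y) by (eapply Rle_trans; [apply Rmax_r|exact Hy]).
    assert (HyXk : Xk <= y) by (eapply Rle_trans; [apply Rmax_l|exact Hy2]).
    assert (Hy3 : Rmax Xnk Xn <= y) by (eapply Rle_trans; [apply Rmax_r|exact Hy2]).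
    assert (HyXnk : Xnk <= y) by (eapply Rle_trans; [apply Rmax_l|exact Hy3]).
    assert (HyXn : Xn <= y) by (eapply Rle_trans; [apply Rmax_r|exact Hy3]).
    assert (HkyXn : Xn <= INR k * y) by nra.
    destruct (HXk y HyXk F1 F2) as [A1 A2].
    destruct (HXnk y HyXnk F1 F3) as [B1 B2].
    assert (F3' : Flat g (INR n * (INR k * y)) rho (1 + e)).
    { replace (INR n * (INR k * y)) with (INR (n * k) * y) by (rewrite mult_INR; ring). exact F3. }
    destruct (HXn (INR k * y) HkyXn F2 F3') as [C1 C2].
    replace (INR n * (INR k * y)) with (INR (n * k) * y) in C1, C2 by (rewrite mult_INR; ring).
    set (K := 1 + 11 * e) in *.
    assert (gy : 0 < g y) by (apply hg; lra).
    assert (gky : 0 < g (INR k * y)) by (apply hg; nra).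
    assert (gnky : 0 < g (INR (n * k) * y)) by (apply hg; nra).
    assert (HK : 1 <= K) by (unfold K; lra).
    pose proof (cube_bound e He He1) as CB. fold K in CB.
    split.
    - apply Rmult_le_reg_r with (g y); auto.
      apply Rle_trans with (f n * (K * g (INR k * y))).
      { rewrite Rmult_assoc. apply Rmult_le_compat_l; lra. }
      apply Rle_trans with (K * (K * g (INR (n * k) * y))).
      { replace (f n * (K * g (INR k * y))) with (K * (f n * g (INR k * y))) by ring.
        apply Rmult_le_compat_l; lra. }
      apply Rle_trans with (K * (K * (K * f (n * k)%nat * g y))).
      { apply Rmult_le_compat_l. lra. apply Rmult_le_compat_l; lra. }
      replace (K * (K * (K * f (n * k)%nat * g y))) with ((K * (K * K)) * (f (n * k)%nat * g y)) by ring.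
      replace ((1 + 77 * e) * f (n * k)%nat * g y) with ((1 + 77 * e) * (f (n * k)%nat * g y)) by ring.
      apply Rmult_le_compat_r. nra. exact CB.
    - apply Rmult_le_reg_r with (g y); auto.
      apply Rle_trans with (K * g (INR (n * k) * y)). exact B1.
      apply Rle_trans with (K * (K * f n * g (INR k * y))).
      { apply Rmult_le_compat_l; lra. }
      apply Rle_trans with (K * (K * f n * (K * f k * g y))).
      { apply Rmult_le_compat_l. lra.
        replace (K * f n * g (INR k * y)) with ((K * f n) * g (INR k * y)) by ring.
        apply Rmult_le_compat_l. nra. lra. }
      replace (K * (K * f n * (K * f k * g y))) with ((K * (K * K)) * (f n * f k * g y)) by ring.
      replace ((1 + 77 * e) * (f n * f k) * g y) with ((1 + 77 * e) * (f n * f k * g y)) by ring.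
      apply Rmult_le_compat_r. nra. exact CB. }
  apply Rle_antisym.
  - apply close_le. nra. intros e He He1. destruct (MAIN e He He1); assumption.
  - apply close_le. nra. intros e He He1. destruct (MAIN e He He1); assumption.
Qed.

Lemma ratio_prop (f : nat -> R) (g : R -> R) :
  (forall n, (1 <= n)%nat -> 0 < f n) -> (forall x, 0 < x -> 0 < g x) ->
  normal_order f g -> weakly_supermult f -> weakly_supermult (fun n => / f n) ->
  FlatProp g -> Doubling g ->
  exists B, 0 < B /\ forall a b, (1 <= a)%nat -> (1 <= b)%nat -> INR a <= INR b -> INR b <= 2 * INR a ->
    f b <= B * f a /\ f a <= B * f b.
Proof.
  intros hf hg Hno Hw1 Hw2 HF [C [X0 [HC HD]]].
  set (e := 1/11).
  destruct (HF (1 + e) ltac:(unfold e; lra)) as [rho [Hrho HFr]].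
  set (e' := Rmin e (rho - 1)).
  assert (He' : 0 < e') by (apply Rmin_pos; unfold e; lra).
  assert (He'e : e' <= e) by apply Rmin_l.
  assert (He'r : 1 + e' <= rho) by (pose proof (Rmin_r e (rho - 1)); unfold e'; lra).
  exists (4 * C). split. lra.
  intros a b Ha Hb Hab1 Hab2.
  assert (HaR : 1 <= INR a) by (apply (le_INR 1); lia).
  assert (HbR : 1 <= INR b) by (apply (le_INR 1); lia).
  assert (fa : 0 < f a) by (apply hf; lia).
  assert (fb : 0 < f b) by (apply hf; lia).
  destruct (approxK f g hf hg Hno Hw1 Hw2 a Ha e e' rho He' He'e ltac:(unfold e; lra) He'r) as [Xa HXa].
  destruct (approxK f g hf hg Hno Hw1 Hw2 b Hb e e' rho He' He'e ltac:(unfold e; lra) He'r) as [Xb HXb].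
  destruct (HFr 1 (INR a) (INR b) (Rmax 1 (Rmax X0 (Rmax Xa Xb))) ltac:(lra) HaR HbR)
      as [y [Hy [F1 [F2 F3]]]].
  rewrite Rmult_1_l in F1.
  assert (Hy1 : 1 <= y) by (eapply Rle_trans; [apply Rmax_l|exact Hy]).
  assert (Hy2 : Rmax X0 (Rmax Xa Xb) <= y) by (eapply Rle_trans; [apply Rmax_r|exact Hy]).
  assert (HyX0 : X0 <= y) by (eapply Rle_trans; [apply Rmax_l|exact Hy2]).
  assert (Hy3 : Rmax Xa Xb <= y) by (eapply Rle_trans; [apply Rmax_r|exact Hy2]).
  assert (HyXa : Xa <= y) by (eapply Rle_trans; [apply Rmax_l|exact Hy3]).
  assert (HyXb : Xb <= y) by (eapply Rle_trans; [apply Rmax_r|exact Hy3]).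
  destruct (HXa y HyXa F1 F2) as [A1 A2].
  destruct (HXb y HyXb F1 F3) as [B1 B2].
  replace (1 + 11 * e) with 2 in A1, A2, B1, B2 by (unfold e; field).
  destruct (HD (INR a * y) (INR b * y)) as [D1 D2]; try nra.
  assert (gy : 0 < g y) by (apply hg; lra).
  assert (gay : 0 < g (INR a * y)) by (apply hg; nra).
  assert (gby : 0 < g (INR b * y)) by (apply hg; nra).
  split.
  - apply Rmult_le_reg_r with (g y); auto. nra.
  - apply Rmult_le_reg_r with (g y); auto. nra.
Qed.

Lemma ln_le' x y : 0 < x -> x <= y -> ln x <= ln y.
Proof. intros Hx [H|H]. left; apply ln_increasing; auto. subst; lra. Qed.

Lemma f_pow (f : nat -> R) :
  (forall n, (1 <= n)%nat -> 0 < f n) ->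
  (forall n k, (1 <= n)%nat -> (1 <= k)%nat -> f (n * k)%nat = f n * f k) ->
  forall n k, (1 <= n)%nat -> f (n ^ k)%nat = f n ^ k.
Proof.
  intros hf hm n k Hn.
  assert (f1 : f 1%nat = 1).
  { pose proof (hm 1%nat 1%nat ltac:(lia) ltac:(lia)). simpl in H.
    assert (0 < f 1%nat) by (apply hf; lia). nra. }
  induction k. simpl. exact f1.
  assert (Hp : (1 <= n ^ k)%nat) by (pose proof (Nat.pow_nonzero n k); lia).
  simpl. rewrite hm; auto. rewrite IHk. reflexivity.
Qed.

Lemma zero_of_bound D A : (forall k, (1 <= k)%nat -> Rabs (INR k * D) <= A) -> D = 0.
Proof.
  intros H. destruct (Req_dec D 0) as [|HD]; auto. exfalso.
  assert (HaD : 0 < Rabs D) by (apply Rabs_pos_lt; auto).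
  pose proof (H 1%nat ltac:(lia)) as H1. simpl in H1. rewrite Rmult_1_l in H1.
  assert (HA : 0 <= A) by (pose proof (Rabs_pos D); lra).
  destruct (up_nat (A / Rabs D + 1)) as [U1 _]. 
  { assert (0 <= A / Rabs D) by (apply Rmult_le_pos; auto; left; apply Rinv_0_lt_compat; auto). lra. }
  set (k := Z.to_nat (up (A / Rabs D + 1))) in *.
  assert (Hk : (1 <= k)%nat).
  { apply INR_le_nat. simpl. assert (0 <= A / Rabs D) by (apply Rmult_le_pos; auto; left; apply Rinv_0_lt_compat; auto). lra. }
  specialize (H k Hk). rewrite Rabs_mult, Rabs_pos_eq in H by apply pos_INR.
  assert (A / Rabs D * Rabs D = A) by (field; lra).
  assert (A + Rabs D < INR k * Rabs D) by nra. lra.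
Qed.

Lemma power_of (f : nat -> R) :
  (forall n, (1 <= n)%nat -> 0 < f n) ->
  (forall n k, (1 <= n)%nat -> (1 <= k)%nat -> f (n * k)%nat = f n * f k) ->
  (exists B, 0 < B /\ forall a b, (1 <= a)%nat -> (1 <= b)%nat -> INR a <= INR b -> INR b <= 2 * INR a ->
    f b <= B * f a /\ f a <= B * f b) ->
  exists c, forall n, (1 <= n)%nat -> f n = Rpower (INR n) c.
Proof.
  intros hf hm [B [HB HBr]].
  assert (ln2 : 0 < ln 2) by (rewrite <- ln_1; apply ln_increasing; lra).
  assert (f2 : 0 < f 2%nat) by (apply hf; lia).
  set (c := ln (f 2%nat) / ln 2).
  exists c. intros n Hn.
  assert (fn : 0 < f n) by (apply hf; lia).
  assert (HnR : 1 <= INR n) by (apply (le_INR 1); lia).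
  assert (KEY : ln (f n) - c * ln (INR n) = 0).
  { apply (zero_of_bound _ (ln B + Rabs c * ln 2)). intros k Hk.
    set (N := (n ^ k)%nat).
    assert (HN : (0 < N)%nat) by (unfold N; pose proof (Nat.pow_nonzero n k); lia).
    set (j := Nat.log2 N).
    destruct (Nat.log2_spec N HN) as [L1 L2]. fold j in L1, L2.
    assert (Hj : (1 <= 2 ^ j)%nat) by (pose proof (Nat.pow_nonzero 2 j); lia).
    assert (R1 : INR (2 ^ j) <= INR N) by (apply le_INR; lia).
    assert (R2 : INR N <= 2 * INR (2 ^ j)).
    { replace 2 with (INR 2) at 1 by (simpl; lra). rewrite <- mult_INR. apply le_INR.
      simpl in L2. lia. }
    destruct (HBr (2 ^ j)%nat N Hj ltac:(lia) R1 R2) as [E1 E2].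
    unfold N in E1, E2, R1, R2. rewrite (f_pow f hf hm n k Hn) in E1, E2.
    rewrite (f_pow f hf hm 2 j ltac:(lia)) in E1, E2.
    rewrite !pow_INR in R1, R2. simpl INR in R1, R2.
    assert (P1 : 0 < f n ^ k) by (apply pow_lt; auto).
    assert (P2 : 0 < f 2%nat ^ j) by (apply pow_lt; auto).
    apply ln_le' in E1; auto. apply ln_le' in E2; auto.
    rewrite ln_mult in E1, E2 by auto. rewrite !ln_pow in E1, E2 by auto.
    assert (P3 : 0 < (1 + 1) ^ j) by (apply pow_lt; lra).
    apply ln_le' in R1; auto. apply ln_le' in R2; [|apply pow_lt; lra].
    rewrite ln_mult in R2 by (try apply pow_lt; lra).
    rewrite !ln_pow in R1, R2 by lra.
    replace (1 + 1) with 2 in R1, R2 by lra.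
    assert (Hc : c * ln 2 = ln (f 2%nat)) by (unfold c; field; lra).
    replace (INR k * (ln (f n) - c * ln (INR n))) with
      ((INR k * ln (f n) - INR j * ln (f 2%nat)) + c * (INR j * ln 2 - INR k * ln (INR n)))
      by (rewrite <- Hc; ring).
    eapply Rle_trans. apply Rabs_triang. apply Rplus_le_compat.
    - apply Rabs_le. lra.
    - rewrite Rabs_mult. apply Rmult_le_compat_l. apply Rabs_pos. apply Rabs_le.
      pose proof ln2. lra. }
  rewrite <- (exp_ln (f n)) by auto. unfold Rpower. f_equal. lra.
Qed.

Lemma bernoulli x N : 0 <= x -> 1 + INR N * x <= (1 + x) ^ N.
Proof.
  intros Hx. induction N. simpl. lra.
  rewrite S_INR. simpl. assert (0 <= INR N) by apply pos_INR.
  assert (1 <= (1 + x) ^ N) by (apply pow_R1_Rle; lra). nra.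
Qed.

Lemma rev_bernoulli x N : 0 <= x -> (1 + x) ^ N * (1 - INR N * x) <= 1.
Proof.
  intros Hx. induction N. simpl. lra.
  rewrite S_INR. simpl. assert (0 <= INR N) by apply pos_INR.
  assert (0 <= (1 + x) ^ N) by (apply pow_le; lra).
  assert ((1 + x) * (1 - (INR N + 1) * x) <= 1 - INR N * x) by nra.
  replace ((1 + x) * (1 + x) ^ N * (1 - (INR N + 1) * x)) with
     ((1 + x) ^ N * ((1 + x) * (1 - (INR N + 1) * x))) by ring.
  apply Rle_trans with ((1 + x) ^ N * (1 - INR N * x)); auto.
  apply Rmult_le_compat_l; auto.
Qed.

Lemma flat_all (g : R -> R) : (forall x, 0 < x -> 0 < g x) -> log_unif_cont g ->
  forall L, 1 < L -> exists rho, 1 < rho /\ forall y, 0 < y -> Flat g y rho L.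
Proof.
  intros hg Hlu L HL.
  destruct (Hlu ((L - 1) / L) ltac:(apply Rdiv_lt_0_compat; lra)) as [d [Hd Hdd]].
  exists (1 + d / 2). split. lra. intros y Hy z Hz1 Hz2.
  assert (Hzp : 0 < z) by lra.
  assert (Hr : Rabs (z / y - 1) < d).
  { assert (1 <= z / y) by (apply Rmult_le_reg_r with y; auto; unfold Rdiv; rewrite Rmult_assoc, Rinv_l; lra).
    assert (z / y <= 1 + d / 2) by (apply Rmult_le_reg_r with y; auto; unfold Rdiv; rewrite Rmult_assoc, Rinv_l; lra).
    rewrite Rabs_pos_eq; lra. }
  specialize (Hdd z y Hzp Hy Hr). apply Rabs_def2 in Hdd as [H1 H2].
  assert (gy : 0 < g y) by auto. assert (gz : 0 < g z) by auto.
  assert (E : g z / g y * g y = g z) by (field; lra).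
  assert (HL1 : (L - 1) / L * L = L - 1) by (field; lra).
  assert (HL2 : 1 + (L - 1) / L <= L).
  { apply Rmult_le_reg_r with L. lra. rewrite Rmult_plus_distr_r, HL1. nra. }
  split.
  - assert (g z / g y <= L) by lra.
    rewrite <- E. apply Rmult_le_compat_r; lra.
  - assert (1 - (L - 1) / L < g z / g y) by lra.
    assert (1 - (L - 1) / L = / L) by (field; lra).
    assert (/ L * g y < g z) by (rewrite <- E; apply Rmult_lt_compat_r; lra).
    apply Rmult_lt_compat_l with (r := L) in H3; [|lra].
    rewrite <- Rmult_assoc, Rinv_r, Rmult_1_l in H3 by lra. lra.
Qed.

Lemma logunif_flatprop (g : R -> R) : (forall x, 0 < x -> 0 < g x) -> log_unif_cont g -> FlatProp g.
Proof.
  intros hg Hlu L HL. destruct (flat_all g hg Hlu L HL) as [rho [Hrho HF]].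
  exists rho. split; auto. intros t1 t2 t3 X H1 H2 H3.
  exists (Rmax X 1). assert (1 <= Rmax X 1) by apply Rmax_r.
  split. apply Rmax_l. split; [|split]; apply HF; apply Rmult_lt_0_compat; lra.
Qed.

Lemma logunif_doubling (g : R -> R) : (forall x, 0 < x -> 0 < g x) -> log_unif_cont g -> Doubling g.
Proof.
  intros hg Hlu. destruct (flat_all g hg Hlu 2 ltac:(lra)) as [rho [Hrho HF]].
  set (N := Z.to_nat (up (/ (rho - 1)))).
  destruct (up_nat (/ (rho - 1))) as [U1 _]. apply Rinv_0_lt_compat; lra. fold N in U1.
  assert (HN : 2 <= rho ^ N).
  { replace rho with (1 + (rho - 1)) by ring. eapply Rle_trans; [|apply bernoulli; lra].
    assert (/ (rho - 1) * (rho - 1) = 1) by (field; lra). nra. }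
  exists (2 ^ N), 1. split. apply pow_lt; lra.
  assert (CH : forall i w z, 1 <= w -> w <= z -> z <= rho ^ i * w ->
     g z <= 2 ^ i * g w /\ g w <= 2 ^ i * g z).
  { induction i; intros w z Hw Hz1 Hz2.
    - simpl in *. assert (z = w) by lra. subst. lra.
    - assert (Hri : 1 <= rho ^ i) by (apply pow_R1_Rle; lra).
      assert (gw : 0 < g w) by (apply hg; lra). assert (gz : 0 < g z) by (apply hg; lra).
      assert (P2 : 0 < 2 ^ i) by (apply pow_lt; lra).
      destruct (Rle_dec z (rho ^ i * w)) as [Hle|Hgt].
      + destruct (IHi w z Hw Hz1 Hle). simpl. split; nra.
      + apply Rnot_le_lt in Hgt.
        destruct (IHi w (rho ^ i * w) Hw ltac:(nra) ltac:(lra)) as [I1 I2].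
        destruct (HF (rho ^ i * w) ltac:(nra) z ltac:(lra) ltac:(simpl in Hz2; lra)) as [J1 J2].
        simpl. split; nra. }
  intros w z Hw Hz1 Hz2. apply (CH N w z Hw Hz1).
  assert (0 < w) by lra. nra.
Qed.

Lemma flat_mono (s : R -> R) : (forall x, 0 < x -> 0 < s x) ->
  (forall x y, 0 < x -> x <= y -> s x <= s y) -> Doubling s -> FlatProp s.
Proof.
  intros hs Hmon [C [X0 [HC HD]]] L HL.
  set (J := (Z.to_nat (up (C * C * C / (L - 1))) + 1)%nat).
  assert (HJ1 : (1 <= J)%nat) by (unfold J; lia).
  assert (HJR : 1 <= INR J) by (apply (le_INR 1); lia).
  assert (HLJ : C * C * C < L ^ J).
  { destruct (up_nat (C * C * C / (L - 1))) as [U _].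
    { apply Rdiv_lt_0_compat; [|lra]. repeat apply Rmult_lt_0_compat; lra. }
    assert (HJ : C * C * C / (L - 1) < INR J) by (unfold J; rewrite plus_INR; simpl; lra).
    replace L with (1 + (L - 1)) by ring. eapply Rlt_le_trans; [|apply bernoulli; lra].
    assert (C * C * C / (L - 1) * (L - 1) = C * C * C) by (field; lra).
    nra. }
  set (rho := 1 + / (2 * INR J)).
  assert (Hx : 0 < / (2 * INR J)) by (apply Rinv_0_lt_compat; lra).
  assert (HrJ : rho ^ J <= 2).
  { pose proof (rev_bernoulli (/ (2 * INR J)) J ltac:(lra)) as RB. fold rho in RB.
    assert (INR J * / (2 * INR J) = 1/2) by (field; lra). rewrite H in RB. lra. }
  exists rho. split. unfold rho; lra.
  intros t1 t2 t3 X H1 H2 H3.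
  set (y0 := Rmax (Rmax X X0) 1).
  assert (Hy01 : 1 <= y0) by apply Rmax_r.
  assert (Hy0X0 : X0 <= y0) by (eapply Rle_trans; [apply Rmax_r|apply Rmax_l]).
  assert (Hy0X : X <= y0) by (eapply Rle_trans; [apply Rmax_l|apply Rmax_l]).
  set (P := fun y => s (t1 * y) * s (t2 * y) * s (t3 * y)).
  assert (Ppos : forall y, 0 < y -> 0 < P y).
  { intros y Hy. unfold P. repeat apply Rmult_lt_0_compat; apply hs; nra. }
  assert (Hrho1 : 1 <= rho) by (unfold rho; lra).
  assert (EX : exists j, (j < J)%nat /\ P (rho ^ S j * y0) <= L * P (rho ^ j * y0)).
  { apply NNPP. intros NE.
    assert (ALL : forall j, (j < J)%nat -> L * P (rho ^ j * y0) < P (rho ^ S j * y0)).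
    { intros j Hj. apply Rnot_le_lt. intros Hc. apply NE. exists j. auto. }
    assert (IND : forall i, (i <= J)%nat -> L ^ i * P y0 <= P (rho ^ i * y0)).
    { induction i; intros Hi. simpl. rewrite Rmult_1_l, Rmult_1_l. lra.
      assert (Hrp : 0 < rho ^ i * y0) by (apply Rmult_lt_0_compat; [apply pow_lt|]; lra).
      pose proof (ALL i ltac:(lia)). pose proof (IHi ltac:(lia)). simpl pow at 1.
      nra. }
    pose proof (IND J (le_n J)) as IJ.
    assert (UP : P (rho ^ J * y0) <= C * C * C * P y0).
    { assert (Hrj1 : 1 <= rho ^ J) by (apply pow_R1_Rle; lra).
      assert (HJy : 1 <= rho ^ J * y0) by nra.
      assert (B : forall t, 1 <= t -> s (t * (rho ^ J * y0)) <= C * s (t * y0)).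
      { intros t Ht. apply Rle_trans with (s (2 * (t * y0))).
        assert (0 < rho ^ J * y0) by nra. assert (rho ^ J * y0 <= 2 * y0) by nra.
        apply Hmon. nra. nra.
        destruct (HD (t * y0) (2 * (t * y0))) as [D1 _]; try nra. }
      unfold P.
      pose proof (B t1 H1). pose proof (B t2 H2). pose proof (B t3 H3).
      assert (0 < s (t1 * (rho ^ J * y0))) by (apply hs; nra).
      assert (0 < s (t2 * (rho ^ J * y0))) by (apply hs; nra).
      assert (0 < s (t3 * (rho ^ J * y0))) by (apply hs; nra).
      assert (0 < s (t1 * y0)) by (apply hs; nra).
      assert (0 < s (t2 * y0)) by (apply hs; nra).
      assert (0 < s (t3 * y0)) by (apply hs; nra).
      replace (C * C * C * (s (t1 * y0) * s (t2 * y0) * s (t3 * y0))) with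
        ((C * s (t1 * y0)) * (C * s (t2 * y0)) * (C * s (t3 * y0))) by ring.
      apply Rmult_le_compat; try nra. }
    pose proof (Ppos y0 ltac:(lra)). nra. }
  destruct EX as [j [Hj Hjp]].
  set (y := rho ^ j * y0) in *.
  assert (Hyy0 : y0 <= y) by (unfold y; assert (1 <= rho ^ j) by (apply pow_R1_Rle; lra); nra).
  assert (Hy : 0 < y) by lra.
  exists y. split. lra.
  replace (rho ^ S j * y0) with (rho * y) in Hjp by (unfold y; simpl; ring).
  unfold P in Hjp.
  assert (M : forall t, 1 <= t -> s (t * y) <= s (t * (rho * y))).
  { intros t Ht. assert (y <= rho * y) by nra. apply Hmon. nra. nra. }
  assert (POS : forall t, 1 <= t -> 0 < s (t * y)) by (intros; apply hs; nra).
  assert (FL : forall t, 1 <= t -> s (t * (rho * y)) <= L * s (t * y) -> Flat s (t * y) rho L).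
  { intros t Ht Hb z Hz1 Hz2. pose proof (POS t Ht).
    assert (s (t * y) <= s z) by (apply Hmon; nra).
    assert (s z <= s (t * (rho * y))) by (apply Hmon; nra).
    split; nra. }
  pose proof (M t1 H1). pose proof (M t2 H2). pose proof (M t3 H3).
  pose proof (POS t1 H1). pose proof (POS t2 H2). pose proof (POS t3 H3).
  split; [|split]; apply FL; auto.
  - assert (s (t1 * (rho * y)) * (s (t2 * y) * s (t3 * y)) <= L * s (t1 * y) * (s (t2 * y) * s (t3 * y))).
    { apply Rle_trans with (s (t1 * (rho * y)) * s (t2 * (rho * y)) * s (t3 * (rho * y))).
      rewrite Rmult_assoc. apply Rmult_le_compat_l. nra. apply Rmult_le_compat; nra. nra. }
    apply Rmult_le_reg_r with (s (t2 * y) * s (t3 * y)). nra. lra.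
  - assert (s (t2 * (rho * y)) * (s (t1 * y) * s (t3 * y)) <= L * s (t2 * y) * (s (t1 * y) * s (t3 * y))).
    { apply Rle_trans with (s (t1 * (rho * y)) * s (t2 * (rho * y)) * s (t3 * (rho * y))).
      replace (s (t1 * (rho * y)) * s (t2 * (rho * y)) * s (t3 * (rho * y))) with
         (s (t2 * (rho * y)) * (s (t1 * (rho * y)) * s (t3 * (rho * y)))) by ring.
      apply Rmult_le_compat_l. nra. apply Rmult_le_compat; nra. nra. }
    apply Rmult_le_reg_r with (s (t1 * y) * s (t3 * y)). nra. lra.
  - assert (s (t3 * (rho * y)) * (s (t1 * y) * s (t2 * y)) <= L * s (t3 * y) * (s (t1 * y) * s (t2 * y))).
    { apply Rle_trans with (s (t1 * (rho * y)) * s (t2 * (rho * y)) * s (t3 * (rho * y))).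
      replace (s (t1 * (rho * y)) * s (t2 * (rho * y)) * s (t3 * (rho * y))) with
         (s (t3 * (rho * y)) * (s (t1 * (rho * y)) * s (t2 * (rho * y)))) by ring.
      apply Rmult_le_compat_l. nra. apply Rmult_le_compat; nra. nra. }
    apply Rmult_le_reg_r with (s (t1 * y) * s (t2 * y)). nra. lra.
Qed.

Lemma inc_doubling (f : nat -> R) (g : R -> R) :
  (forall n, (1 <= n)%nat -> 0 < f n) -> (forall x, 0 < x -> 0 < g x) ->
  normal_order f g -> weakly_supermult (fun n => / f n) ->
  (forall x y, 0 < x -> x <= y -> g x <= g y) -> Doubling g.
Proof.
  intros hf hg Hno Hw2 Hmon.
  destruct (rawA2 f g Hno Hw2 4%nat ltac:(lia) (1/2) ltac:(lra) ltac:(lra)) as [X HX].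
  assert (f4 : 0 < f 4%nat) by (apply hf; lia).
  exists (6 * f 4%nat + 1), (3/2 * (Rabs X + 1)). split. lra.
  intros w z Hw Hz1 Hz2.
  assert (HX0 : X <= 2 / 3 * w) by (pose proof (Rle_abs X); lra).
  assert (Hw0 : 1 < w) by (pose proof (Rabs_pos X); lra).
  destruct (HX (2/3 * w) HX0) as [m [Hm [[Hm1 Hm2] [Hi [Ha Hb]]]]].
  rewrite mult_INR in Hb. replace (INR 4) with 4 in Hb by (simpl; lra).
  assert (fm : 0 < f m) by (apply hf; lia).
  assert (f4m : 0 < f (4 * m)%nat) by (apply hf; lia).
  assert (gm : 0 < g (INR m)) by (apply hg; lra).
  assert (g4m : 0 < g (4 * INR m)) by (apply hg; lra).
  apply Rabs_def2 in Ha, Hb. destruct Ha, Hb.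
  assert (B0 : (1 - 1/2) * f (4 * m)%nat <= f 4%nat * f m).
  { apply Rmult_le_compat_r with (r := f 4%nat * f m * f (4 * m)%nat) in Hi;
      [|left; repeat apply Rmult_lt_0_compat; lra].
    replace ((1 - 1/2) * / f 4%nat * / f m * (f 4%nat * f m * f (4 * m)%nat))
      with ((1 - 1/2) * f (4 * m)%nat) in Hi by (field; lra).
    replace (/ f (4 * m)%nat * (f 4%nat * f m * f (4 * m)%nat)) with (f 4%nat * f m) in Hi
      by (field; lra). exact Hi. }
  assert (G : g (4 * INR m) <= 6 * f 4%nat * g (INR m)) by nra.
  assert (gz1 : g z <= g (4 * INR m)) by (apply Hmon; lra).
  assert (gm1 : g (INR m) <= g w) by (apply Hmon; lra).
  assert (gw0 : g w <= g z) by (apply Hmon; lra).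
  assert (gw : 0 < g w) by (apply hg; lra).
  split; nra.
Qed.

Lemma dec_doubling (f : nat -> R) (g : R -> R) :
  (forall n, (1 <= n)%nat -> 0 < f n) -> (forall x, 0 < x -> 0 < g x) ->
  normal_order f g -> weakly_supermult f ->
  (forall x y, 0 < x -> x <= y -> g y <= g x) -> Doubling g.
Proof.
  intros hf hg Hno Hw1 Hmon.
  destruct (rawA1 f g Hno Hw1 4%nat ltac:(lia) (1/2) ltac:(lra) ltac:(lra)) as [X HX].
  assert (f4 : 0 < f 4%nat) by (apply hf; lia).
  exists (6 / f 4%nat + 1), (3/2 * (Rabs X + 1)). split.
  { assert (0 < 6 / f 4%nat) by (apply Rdiv_lt_0_compat; lra). lra. }
  intros w z Hw Hz1 Hz2.
  assert (HX0 : X <= 2 / 3 * w) by (pose proof (Rle_abs X); lra).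
  assert (Hw0 : 1 < w) by (pose proof (Rabs_pos X); lra).
  destruct (HX (2/3 * w) HX0) as [m [Hm [[Hm1 Hm2] [Hi [Ha Hb]]]]].
  rewrite mult_INR in Hb. replace (INR 4) with 4 in Hb by (simpl; lra).
  assert (fm : 0 < f m) by (apply hf; lia).
  assert (gm : 0 < g (INR m)) by (apply hg; lra).
  assert (g4m : 0 < g (4 * INR m)) by (apply hg; lra).
  apply Rabs_def2 in Ha, Hb. destruct Ha, Hb.
  assert (G : f 4%nat * g (INR m) <= 6 * g (4 * INR m)) by nra.
  assert (G' : g (INR m) <= 6 / f 4%nat * g (4 * INR m)).
  { apply Rmult_le_reg_l with (f 4%nat). lra.
    replace (f 4%nat * (6 / f 4%nat * g (4 * INR m))) with (6 * g (4 * INR m)) by (field; lra). lra. }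
  assert (gz1 : g (4 * INR m) <= g z) by (apply Hmon; lra).
  assert (gm1 : g w <= g (INR m)) by (apply Hmon; lra).
  assert (gw0 : g z <= g w) by (apply Hmon; lra).
  assert (gw : 0 < g w) by (apply hg; lra).
  assert (0 < 6 / f 4%nat) by (apply Rdiv_lt_0_compat; lra).
  split; nra.
Qed.

Lemma flatprop_inv (g : R -> R) : (forall x, 0 < x -> 0 < g x) ->
  FlatProp (fun x => / g x) -> FlatProp g.
Proof.
  intros hg HF L HL. destruct (HF L HL) as [rho [Hrho H]]. exists rho. split; auto.
  intros t1 t2 t3 X H1 H2 H3. destruct (H t1 t2 t3 (Rmax X 1) H1 H2 H3) as [y [Hy [F1 [F2 F3]]]].
  assert (Hyp : 0 < y) by (pose proof (Rmax_r X 1); lra).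
  assert (Hy0 : forall t, 1 <= t -> Flat (fun x => / g x) (t * y) rho L -> Flat g (t * y) rho L).
  { intros t Ht F z Hz1 Hz2.
    destruct (F z Hz1 Hz2) as [A B].
    assert (gz : 0 < g z) by (apply hg; nra). assert (gy : 0 < g (t * y)) by (apply hg; nra).
    split.
    - apply Rmult_le_reg_r with (/ g z * / g (t * y)). apply Rmult_lt_0_compat; apply Rinv_0_lt_compat; lra.
      replace (g z * (/ g z * / g (t * y))) with (/ g (t * y)) by (field; lra).
      replace (L * g (t * y) * (/ g z * / g (t * y))) with (L * / g z) by (field; lra). lra.
    - apply Rmult_le_reg_r with (/ g z * / g (t * y)). apply Rmult_lt_0_compat; apply Rinv_0_lt_compat; lra.
      replace (g (t * y) * (/ g z * / g (t * y))) with (/ g z) by (field; lra).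
      replace (L * g z * (/ g z * / g (t * y))) with (L * / g (t * y)) by (field; lra). lra. }
  exists y. split. pose proof (Rmax_l X 1); lra. split; [|split]; apply Hy0; auto.
Qed.

Lemma doubling_inv (g : R -> R) : (forall x, 0 < x -> 0 < g x) ->
  Doubling g -> Doubling (fun x => / g x).
Proof.
  intros hg [C [X0 [HC HD]]]. exists C, (Rmax X0 1). split; auto.
  intros w z Hw Hz1 Hz2.
  assert (HwX : X0 <= w) by (pose proof (Rmax_l X0 1); lra).
  assert (Hw1 : 1 <= w) by (pose proof (Rmax_r X0 1); lra).
  destruct (HD w z HwX Hz1 Hz2) as [A B].
  assert (gz : 0 < g z) by (apply hg; lra). assert (gw : 0 < g w) by (apply hg; lra).
  split.
  - apply Rmult_le_reg_r with (g z * g w). nra.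
    replace (/ g z * (g z * g w)) with (g w) by (field; lra).
    replace (C * / g w * (g z * g w)) with (C * g z) by (field; lra). lra.
  - apply Rmult_le_reg_r with (g z * g w). nra.
    replace (/ g w * (g z * g w)) with (g z) by (field; lra).
    replace (C * / g z * (g z * g w)) with (C * g w) by (field; lra). lra.
Qed.

Theorem corollary2 (f : nat -> R) (g : R -> R) :
  (forall n : nat, (1 <= n)%nat -> 0 < f n) ->
  weakly_supermult f ->
  weakly_supermult (fun n => / f n) ->
  (forall x : R, 0 < x -> 0 < g x) ->
  normal_order f g ->
  (monotonic_pos g \/ log_unif_cont g) ->
  exists c : R, forall n : nat, (1 <= n)%nat -> f n = Rpower (INR n) c.
Proof.
  intros hf Hw1 Hw2 hg Hno Hcase.
  assert (FD : FlatProp g /\ Doubling g).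
  { destruct Hcase as [[Hinc|Hdec]|Hlu].
    - split. apply flat_mono; auto. apply (inc_doubling f g); auto.
      apply (inc_doubling f g); auto.
    - assert (D : Doubling g) by (apply (dec_doubling f g); auto).
      split; auto. apply flatprop_inv; auto. apply flat_mono.
      + intros x Hx. apply Rinv_0_lt_compat. auto.
      + intros x y Hx Hxy. apply Rinv_le_contravar. apply hg; lra. apply Hdec; auto.
      + apply doubling_inv; auto.
    - split. apply logunif_flatprop; auto. apply logunif_doubling; auto. }
  destruct FD as [HF HD].
  apply power_of. exact hf.
  - intros n k Hn Hk. apply (mult_prop f g); auto.
  - apply (ratio_prop f g); auto.
Qed.
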